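(* Let $H$ be a graph whose complement $\overline{H}$ is a co-bipartite circular arc graph. Then $H^*$ is a comparability graph.
   Context: A circular arc graph is the intersection graph of a finite family of arcs of a circle; a graph is co-bipartite if its vertex set can be partitioned into two cliques. For a graph $H$, the graph $H^*$ has vertex set $E(H)$, and two edges $wx$ and $yz$ of $H$ are adjacent in $H^*$ iff $\{w,x,y,z\}$ induces a $2K_2$ (two disjoint edges and no other edges) in $H$; equivalently $H^*$ is the complement of the square of the line graph of $H$. A comparability graph is a graph whose edges can be transitively oriented, i.e. it is the comparability graph of some partial order on its vertex set. *)

(* Defs.v *)
From mathcomp Require Import all_boot.
From Stdlib Require Import Reals ZArith.

Set Implicit Arguments.
Unset Strict Implicit.
Unset Printing Implicit Defensive.

(* A (finite simple) graph on T is a symmetric irreflexive e : rel T. *)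

Definition gcompl (T : finType) (e : rel T) : rel T :=
  fun x y => (x != y) && ~~ e x y.

Definition is_clique (T : finType) (e : rel T) (S : {set T}) : Prop :=
  forall x y, x \in S -> y \in S -> x != y -> e x y.

Definition cobipartite (T : finType) (e : rel T) : Prop :=
  exists S : {set T}, is_clique e S /\ is_clique e (~: S).

(* The circle is R/Z.  The closed arc starting at a of length l >= 0
   (going counterclockwise) contains t iff some integer translate of t
   lies in [a, a + l]  (l >= 1 gives the whole circle). *)
Definition on_arc (a l t : R) : Prop :=
  exists k : Z, (a <= t + IZR k <= a + l)%R.

Definition circular_arc_graph (T : finType) (e : rel T) : Prop :=
  exists (A L : T -> R),
    (forall v, (0 <= L v)%R) /\
    (forall u v, u != v ->
       (e u v <-> exists t : R, on_arc (A u) (L u) t /\ on_arc (A v) (L v) t)).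

Definition is_edge (T : finType) (e : rel T) (S : {set T}) : bool :=
  [exists x, exists y, [&& x != y, e x y & S == [set x; y]]].

Definition edge_type (T : finType) (e : rel T) : Type :=
  { S : {set T} | is_edge e S }.

(* H^* : edges wx and yz are adjacent iff {w,x,y,z} induces a 2K2 in H,
   i.e. the two edges are vertex-disjoint and no edge of H joins them. *)
Definition star_rel (T : finType) (e : rel T) : rel (edge_type e) :=
  fun E1 E2 =>
    [disjoint sval E1 & sval E2] &&
    [forall x in sval E1, forall y in sval E2, ~~ e x y].

Arguments star_rel {T} e.

Definition comparability_graph (V : Type) (E : rel V) : Prop :=
  exists o : rel V,
    (forall u v, o u v -> E u v) /\
    (forall u v, E u v -> o u v || o v u) /\
    (forall u v, o u v -> ~~ o v u) /\
    (forall u v w, o u v -> o v w -> o u w).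

(* Main.v *)
Require Import Defs.
From mathcomp Require Import all_boot.
From Stdlib Require Import Reals Lra Lia ZArith Classical.

Set Implicit Arguments.
Unset Strict Implicit.
Unset Printing Implicit Defensive.

Section RealPart.
Local Open Scope R_scope.

Definition mt p a q b : Prop :=
  (p <= q /\ (q - p <= a \/ 1 - (q - p) <= b)) \/
  (q < p /\ (q - p + 1 <= a \/ p - q <= b)).
Definition mtl p a q b := q <= p + a \/ p + 1 <= q + b.
Lemma mt_lt p a q b : p < q -> mt p a q b -> mtl p a q b.
Proof. unfold mt, mtl; intros; lra. Qed.
Lemma mt_gt p a q b : q < p -> mt p a q b -> mtl q b p a.
Proof. unfold mt, mtl; intros; lra. Qed.
Lemma nmt_lt p a q b : p < q -> ~ mt p a q b -> p + a < q /\ q + b < p + 1.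
Proof. unfold mt; intros; lra. Qed.
Lemma nmt_gt p a q b : q < p -> ~ mt p a q b -> q + b < p /\ p + a < q + 1.
Proof. unfold mt; intros; lra. Qed.
Ltac dsolve := first [ lra | split; dsolve | left; dsolve | right; dsolve ].
Lemma mt_sym p a q b : 0 <= a -> 0 <= b -> mt p a q b -> mt q b p a.
Proof. unfold mt; intros Ha Hb H; destruct H as [[? [?|?]]|[? [?|?]]]; dsolve. Qed.
Lemma mt_refl p a : 0 <= a -> mt p a p a.
Proof. unfold mt; intros; left; split; [lra | left; lra]. Qed.

Definition Pz (z a : R) : R := 1 - frac_part (z - a).

Lemma Pz_range z a : 0 < Pz z a <= 1.
Proof. unfold Pz; destruct (base_fp (z - a)); lra. Qed.

Lemma Pz_self u : Pz u u = 1.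
Proof. unfold Pz; rewrite Rminus_diag fp_R0; lra. Qed.

Definition shift (w v : R) := if Rlt_dec w v then v - w else v - w + 1.

Lemma Pz_shift z u a : Pz u a = shift (Pz z u) (Pz z a).
Proof.
  unfold Pz, shift.
  replace (u - a) with ((z - a) - (z - u)) by ring.
  destruct (Rlt_dec (1 - frac_part (z - u)) (1 - frac_part (z - a))).
  - rewrite Rminus_fp2 /=; lra.
  - rewrite Rminus_fp1 /=; lra.
Qed.

Lemma fp_diff z a b :
  frac_part (b - a) =
  if Rle_dec (Pz z a) (Pz z b) then Pz z b - Pz z a else Pz z b - Pz z a + 1.
Proof.
  unfold Pz.
  replace (b - a) with ((z - a) - (z - b)) by ring.
  destruct (Rle_dec (1 - frac_part (z - a)) (1 - frac_part (z - b))).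
  - rewrite Rminus_fp1 /=; lra.
  - rewrite Rminus_fp2 /=; lra.
Qed.

Lemma meet_frac a l b m : 0 <= l -> 0 <= m ->
  ((exists t, on_arc a l t /\ on_arc b m t) <->
   (frac_part (b - a) <= l \/ 1 - frac_part (b - a) <= m)).
Proof.
  intros Hl Hm.
  pose proof (Rplus_Int_part_frac_part (b - a)) as Hd.
  pose proof (base_fp (b - a)) as Hb.
  set (n := Int_part (b - a)) in *.
  set (d := frac_part (b - a)) in *.
  clearbody n d.
  split.
  - intros [t [[k1 H1] [k2 H2]]].
    destruct (Z.le_gt_cases (k2 - k1 - n) 0) as [Hj|Hj].
    + apply IZR_le in Hj. rewrite !minus_IZR in Hj. left; lra.
    + assert (Hj' : (1 <= k2 - k1 - n)%Z) by lia.
      apply IZR_le in Hj'. rewrite !minus_IZR in Hj'. right; lra.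
  - intros [H|H].
    + exists b; split.
      * exists (- n)%Z. rewrite opp_IZR. lra.
      * exists 0%Z. simpl. lra.
    + exists a; split.
      * exists 0%Z. simpl. lra.
      * exists (n + 1)%Z. rewrite plus_IZR. simpl. lra.
Qed.

Lemma meet_mt z a l b m : 0 <= l -> 0 <= m ->
  ((exists t, on_arc a l t /\ on_arc b m t) <-> mt (Pz z a) l (Pz z b) m).
Proof.
  intros Hl Hm. rewrite meet_frac //. rewrite (fp_diff z).
  pose proof (Pz_range z a); pose proof (Pz_range z b).
  unfold mt; destruct (Rle_dec (Pz z a) (Pz z b)); simpl; split; intro Hx;
  repeat match goal with H: _ \/ _ |- _ => destruct H | H: _ /\ _ |- _ => destruct H end; dsolve.
Qed.

Ltac conv :=
  repeat match goal with
  | H : mt ?p _ ?q _ |- _ => first [ apply mt_lt in H; [|lra] | apply mt_gt in H; [|lra] | (assert (p = q) by lra; clear H)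
                                   | destruct (Rtotal_order p q) as [?|[?|?]] ]
  | H : ~ mt ?p _ ?q _ |- _ => first [ apply nmt_lt in H; [|lra] | apply nmt_gt in H; [|lra] ]
  end;
  repeat match goal with H : _ /\ _ |- _ => destruct H end.
Ltac search := first [ lra | match goal with H : mtl _ _ _ _ |- _ => destruct H as [H|H]; search end ].
Ltac neqs := repeat match goal with
  | H : ~ mt ?p _ ?q _ |- _ =>
    lazymatch goal with
    | _ : p <> q |- _ => fail
    | _ => assert (p <> q) by (intro; subst; apply H; left; split; [lra|left; lra])
    end end.

Lemma C1 px py qx qy a b c d :
  0 < px <= 1 -> 0 < py <= 1 -> 0 < qx <= 1 -> 0 < qy <= 1 ->
  0 <= a -> 0 <= b -> 0 <= c -> 0 <= d ->
  ~ mt px a py b -> ~ mt qx c qy d ->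
  mt px a qx c -> mt py b qy d -> mt px a qy d -> mt qx c py b ->
  Rmin px py <> Rmin qx qy /\
  (Rmin px py < Rmin qx qy -> Rmin qx qy < Rmax px py /\ Rmax px py < Rmax qx qy).
Proof.
  unfold Rmin, Rmax; intros.
  neqs.
  destruct (Rle_dec px py); destruct (Rle_dec qx qy);
  destruct (Rle_dec px qx); destruct (Rle_dec py qy); destruct (Rle_dec px qy); destruct (Rle_dec qx py);
  (split; [intro; conv; search | intro; conv; split; search]).
Qed.

Lemma C2a px1 py1 px2 py2 px3 py3 a1 b1 a2 b2 a3 b3 :
  0 < px1 <= 1 -> 0 < py1 <= 1 -> 0 < px2 <= 1 -> 0 < py2 <= 1 -> 0 < px3 <= 1 -> 0 < py3 <= 1 ->
  0 <= a1 -> 0 <= b1 -> 0 <= a2 -> 0 <= b2 -> 0 <= a3 -> 0 <= b3 ->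
  ~ mt px1 a1 py1 b1 -> ~ mt px2 a2 py2 b2 -> ~ mt px3 a3 py3 b3 ->
  mt px1 a1 px2 a2 -> mt px2 a2 px3 a3 -> mt px1 a1 px3 a3 ->
  mt py1 b1 py2 b2 -> mt py2 b2 py3 b3 -> mt py1 b1 py3 b3 ->
  mt px1 a1 py2 b2 -> mt px2 a2 py1 b1 -> mt px2 a2 py3 b3 -> mt px3 a3 py2 b2 ->
  Rmin px1 py1 < Rmin px2 py2 -> Rmin px2 py2 < Rmin px3 py3 ->
  Rmin px3 py3 < Rmax px1 py1 -> Rmax px1 py1 < Rmax px2 py2 -> Rmax px2 py2 < Rmax px3 py3 ->
  Rmin px2 py2 < Rmax px1 py1 -> Rmin px3 py3 < Rmax px2 py2 ->
  ~ mt px1 a1 py3 b3 ->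
  Rmin px1 py3 < Rmax px1 py1 -> Rmin px1 py3 < Rmax px2 py2 -> Rmin px1 py3 < Rmax px3 py3 ->
  Rmin px1 py1 < Rmax px1 py3 -> Rmin px2 py2 < Rmax px1 py3 -> Rmin px3 py3 < Rmax px1 py3 ->
  False.
Proof.
  unfold Rmin, Rmax; intros.
  neqs.
  destruct (Rle_dec px1 py1); destruct (Rle_dec px2 py2); destruct (Rle_dec px3 py3);
  destruct (Rle_dec px1 py3);
  conv; search.
Qed.

Lemma C2b px1 py1 px2 py2 px3 py3 a1 b1 a2 b2 a3 b3 :
  0 < px1 <= 1 -> 0 < py1 <= 1 -> 0 < px2 <= 1 -> 0 < py2 <= 1 -> 0 < px3 <= 1 -> 0 < py3 <= 1 ->
  0 <= a1 -> 0 <= b1 -> 0 <= a2 -> 0 <= b2 -> 0 <= a3 -> 0 <= b3 ->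
  ~ mt px1 a1 py1 b1 -> ~ mt px2 a2 py2 b2 -> ~ mt px3 a3 py3 b3 ->
  mt px1 a1 px2 a2 -> mt px2 a2 px3 a3 -> mt px1 a1 px3 a3 ->
  mt py1 b1 py2 b2 -> mt py2 b2 py3 b3 -> mt py1 b1 py3 b3 ->
  mt px1 a1 py2 b2 -> mt px2 a2 py1 b1 -> mt px2 a2 py3 b3 -> mt px3 a3 py2 b2 ->
  Rmin px1 py1 < Rmin px2 py2 -> Rmin px2 py2 < Rmin px3 py3 ->
  Rmin px3 py3 < Rmax px1 py1 -> Rmax px1 py1 < Rmax px2 py2 -> Rmax px2 py2 < Rmax px3 py3 ->
  Rmin px2 py2 < Rmax px1 py1 -> Rmin px3 py3 < Rmax px2 py2 ->
  ~ mt px3 a3 py1 b1 ->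
  Rmin px3 py1 < Rmax px1 py1 -> Rmin px3 py1 < Rmax px2 py2 -> Rmin px3 py1 < Rmax px3 py3 ->
  Rmin px1 py1 < Rmax px3 py1 -> Rmin px2 py2 < Rmax px3 py1 -> Rmin px3 py3 < Rmax px3 py1 ->
  False.
Proof.
  unfold Rmin, Rmax; intros.
  neqs.
  destruct (Rle_dec px1 py1); destruct (Rle_dec px2 py2); destruct (Rle_dec px3 py3);
  destruct (Rle_dec px3 py1);
  conv; search.
Qed.

Lemma strip1 px py a b qx qy c d gx gy g h :
  0 < px <= 1 -> 0 < py <= 1 -> 0 < qx <= 1 -> 0 < qy <= 1 -> 0 < gx <= 1 -> 0 < gy <= 1 ->
  0 <= a -> 0 <= b -> 0 <= c -> 0 <= d -> 0 <= g -> 0 <= h ->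
  ~ mt px a py b -> ~ mt qx c qy d -> ~ mt gx g gy h ->
  mt gx g qx c -> mt gy h py b ->
  py < px -> qx < qy -> qy <= py -> gy < gx ->
  shift qx gx < shift qx gy -> False.
Proof.
  unfold shift; intros.
  destruct (Rlt_dec qx gx); destruct (Rlt_dec qx gy); simpl in *; neqs;
  destruct (Rle_dec gx qx); destruct (Rle_dec gy py); conv; search.
Qed.

Lemma strip2 px py a b qx qy c d gx gy g h w :
  0 < px <= 1 -> 0 < py <= 1 -> 0 < qx <= 1 -> 0 < qy <= 1 -> 0 < gx <= 1 -> 0 < gy <= 1 ->
  0 <= a -> 0 <= b -> 0 <= c -> 0 <= d -> 0 <= g -> 0 <= h ->
  ~ mt px a py b -> ~ mt qx c qy d -> ~ mt gx g gy h ->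
  mt gx g qx c -> mt gy h py b ->
  py < px -> qx < qy -> px <= qx -> gy < gx ->
  qx <= w -> w < qy -> (qx <= gx -> gx < qy -> gx <= w) ->
  shift w gx < shift w gy -> False.
Proof.
  unfold shift; intros.
  destruct (Rlt_dec w gx); destruct (Rlt_dec w gy); simpl in *; neqs;
  destruct (Rle_dec gx qx); destruct (Rle_dec gy py); destruct (Rle_dec gx qy); conv; search.
Qed.

Lemma good_gen px py a b qx qy c d :
  0 < px <= 1 -> 0 < py <= 1 -> 0 < qx <= 1 -> 0 < qy <= 1 ->
  0 <= a -> 0 <= b -> 0 <= c -> 0 <= d ->
  ~ mt px a py b -> ~ mt qx c qy d ->
  mt px a qx c -> mt py b qy d ->
  (py < px -> qx < qy -> py < qy /\ qx < px) ->
  (px < py -> qy < qx -> px < qx /\ qy < py) ->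
  Rmin px py < Rmax qx qy.
Proof.
  unfold Rmin, Rmax; intros.
  neqs.
  destruct (Rle_dec px py); destruct (Rle_dec qx qy);
  destruct (Rle_dec px qx); destruct (Rle_dec py qy);
  try (destruct H13; [lra|lra|]); try (destruct H14; [lra|lra|]);
  conv; search.
Qed.

End RealPart.

Definition Rltb (x y : R) : bool := if Rlt_dec x y then true else false.
Lemma RltbP (x y : R) : reflect (x < y)%R (Rltb x y).
Proof. rewrite /Rltb; case: Rlt_dec => H; [by constructor | by constructor]. Qed.

Lemma seq_max (T : eqType) (f : T -> R) (s : seq T) x0 : x0 \in s ->
  exists w, w \in s /\ forall v, v \in s -> (f v <= f w)%R.
Proof.
  elim: s x0 => [|a s IH] x0 //.
  case: s IH => [|b s] IH _.
  - exists a; split; first by rewrite inE.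
    move=> v; rewrite inE => /eqP ->; lra.
  - have [w [Hw Hmax]] := IH b (mem_head _ _).
    case: (Rle_dec (f a) (f w)) => Hc.
    + exists w; split; first by rewrite inE Hw orbT.
      move=> v; rewrite inE => /orP [/eqP ->|Hv]; [lra | exact: Hmax].
    + exists a; split; first by rewrite inE eqxx.
      move=> v; rewrite inE => /orP [/eqP ->|Hv]; first lra.
      have := Hmax v Hv; lra.
Qed.

Section Graph.
Variables (T : finType) (e : rel T) (S : {set T}) (A L : T -> R).
Hypothesis esym : symmetric e.
Hypothesis eirr : irreflexive e.
Hypothesis HS1 : is_clique (gcompl e) S.
Hypothesis HS2 : is_clique (gcompl e) (~: S).
Hypothesis HL : forall v, (0 <= L v)%R.
Hypothesis Harc : forall u v, u != v ->
  (gcompl e u v <-> exists t : R, on_arc (A u) (L u) t /\ on_arc (A v) (L v) t).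

Definition Hedge (x y : T) : bool := [&& x \in S, y \notin S & e x y].
Definition pos (t : R) (v : T) : R := Pz t (A v).
Definition MeetP (t : R) (u v : T) : Prop := mt (pos t u) (L u) (pos t v) (L v).

Lemma pos_range t v : (0 < pos t v <= 1)%R.
Proof. exact: Pz_range. Qed.

Lemma gc_meet t u v : u != v -> (gcompl e u v <-> MeetP t u v).
Proof. move=> Huv; rewrite Harc //; exact: meet_mt. Qed.

Lemma meet_refl t u : MeetP t u u.
Proof. exact: mt_refl. Qed.

Lemma meet_sym t u v : MeetP t u v -> MeetP t v u.
Proof. exact: mt_sym. Qed.

Lemma meetXX t x x' : x \in S -> x' \in S -> MeetP t x x'.
Proof.
  move=> Hx Hx'; case: (eqVneq x x') => [->|Hn]; first exact: meet_refl.
  apply/(gc_meet t Hn); exact: HS1.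
Qed.

Lemma meetYY t y y' : y \notin S -> y' \notin S -> MeetP t y y'.
Proof.
  move=> Hy Hy'; case: (eqVneq y y') => [->|Hn]; first exact: meet_refl.
  apply/(gc_meet t Hn); apply: HS2 => //; by rewrite inE.
Qed.

Lemma SnS x y : x \in S -> y \notin S -> x != y.
Proof. by move=> Hx Hy; apply/eqP => Exy; rewrite -Exy Hx in Hy. Qed.

Lemma hedge_nmeet t x y : Hedge x y -> ~ MeetP t x y.
Proof.
  case/and3P => Hx Hy He Hm.
  have := (proj2 (gc_meet t (SnS Hx Hy)) Hm).
  by rewrite /gcompl He andbF.
Qed.

Lemma meet_nedge t x y : x \in S -> y \notin S -> MeetP t x y -> ~~ e x y.
Proof.
  move=> Hx Hy Hm. have := (proj2 (gc_meet t (SnS Hx Hy)) Hm).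
  by case/andP.
Qed.

Lemma nmeet_hedge t x y : x \in S -> y \notin S -> ~ MeetP t x y -> Hedge x y.
Proof.
  move=> Hx Hy Hm; rewrite /Hedge Hx Hy /=.
  apply/negPn/negP => Hne; apply: Hm; apply/(gc_meet t (SnS Hx Hy)).
  by rewrite /gcompl SnS.
Qed.

Lemma hedge_neq t x y : Hedge x y -> pos t x <> pos t y.
Proof.
  move=> H Heq; apply: (@hedge_nmeet t x y H); rewrite /MeetP Heq; left; split; first lra.
  left; have := HL x; lra.
Qed.

Definition covY (t : R) : {set T * T} :=
  [set p | Hedge p.1 p.2 && Rltb (pos t p.1) (pos t p.2)].
Definition cnt t := #|covY t|.

Lemma pos_shift z w v : pos (A w) v = shift (pos z w) (pos z v).
Proof. exact: Pz_shift. Qed.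

Lemma hedgeS x y : Hedge x y -> x \in S /\ y \notin S.
Proof. by case/and3P. Qed.

Lemma strip (z : R) (Hmin : forall w, cnt z <= cnt (A w)) x y x' y' :
  Hedge x y -> Hedge x' y' -> (pos z y < pos z x)%R -> (pos z x' < pos z y')%R ->
  (pos z y < pos z y')%R /\ (pos z x' < pos z x)%R.
Proof.
  move=> HE HF H1 H2.
  have [Hx Hy] := hedgeS HE; have [Hx' Hy'] := hedgeS HF.
  have nE := @hedge_nmeet z _ _ HE; have nF := @hedge_nmeet z _ _ HF.
  have Rx := pos_range z x; have Ry := pos_range z y.
  have Rx' := pos_range z x'; have Ry' := pos_range z y'.
  have Lx := HL x; have Ly := HL y; have Lx' := HL x'; have Ly' := HL y'.
  case: (Rlt_dec (pos z y) (pos z y')) => C1; case: (Rlt_dec (pos z x') (pos z x)) => C2;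
    try by split.
  -
    exfalso.
    set M := [set v | [exists y0, Hedge v y0] && ~~ Rltb (pos z v) (pos z x') && Rltb (pos z v) (pos z y')].
    have Mx' : x' \in M.
      rewrite inE; apply/andP; split; [apply/andP; split|].
      - by apply/existsP; exists y'.
      - by apply/negP => /RltbP; lra.
      - by apply/RltbP.
    have := @seq_max _ (pos z) (enum M) x'; rewrite mem_enum => /(_ Mx') [w [Hw Hmax]].
    rewrite mem_enum in Hw.
    have Hw' := Hw; rewrite inE in Hw'; case/andP: Hw' => /andP [_ /negP Hw1] /RltbP Hw2.
    have {}Hw1 : ~ (pos z w < pos z x')%R by move=> ?; apply: Hw1; apply/RltbP.
    have Hlt : cnt (A w) < cnt z.
      apply: proper_card; rewrite properE; apply/andP; split.
      - apply/subsetP => [[gx gy]]; rewrite !inE /= => /andP [HG /RltbP Hr].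
        rewrite HG /=; apply/RltbP.
        case: (Rlt_dec (pos z gx) (pos z gy)) => // Hc; exfalso.
        have Hne := @hedge_neq z _ _ HG.
        have [Hgx Hgy] := hedgeS HG.
        apply: (@strip2 (pos z x) (pos z y) (L x) (L y) (pos z x') (pos z y') (L x') (L y')
                  (pos z gx) (pos z gy) (L gx) (L gy) (pos z w)) => //;
          try apply: pos_range; try apply: HL; try apply: (@hedge_nmeet z); try done.
        + exact: meetXX.
        + exact: meetYY.
        + lra.
        + lra.
        + lra.
        + move=> Hq1 Hq2; apply: Hmax; rewrite mem_enum inE; apply/andP; split; [apply/andP; split|].
          * by apply/existsP; exists gy.
          * by apply/negP => /RltbP; lra.
          * by apply/RltbP.
        + by rewrite -!pos_shift.
      - apply/subsetPn; exists (x', y').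
        + by rewrite inE /= HF; apply/RltbP.
        + rewrite inE /= HF /=; apply/negP => /RltbP.
          rewrite !(pos_shift z) /shift.
          case: Rlt_dec => ?; case: Rlt_dec => ? /=; lra.
    by have := Hmin w; rewrite leqNgt Hlt.
  -
    exfalso.
    have Hlt : cnt (A x') < cnt z.
      apply: proper_card; rewrite properE; apply/andP; split.
      - apply/subsetP => [[gx gy]]; rewrite !inE /= => /andP [HG /RltbP Hr].
        rewrite HG /=; apply/RltbP.
        case: (Rlt_dec (pos z gx) (pos z gy)) => // Hc; exfalso.
        have Hne := @hedge_neq z _ _ HG.
        have [Hgx Hgy] := hedgeS HG.
        apply: (@strip1 (pos z x) (pos z y) (L x) (L y) (pos z x') (pos z y') (L x') (L y')
                  (pos z gx) (pos z gy) (L gx) (L gy)) => //;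
          try apply: pos_range; try apply: HL; try apply: (@hedge_nmeet z); try done.
        + exact: meetXX.
        + exact: meetYY.
        + lra.
        + lra.
        + by rewrite -!pos_shift.
      - apply/subsetPn; exists (x', y').
        + by rewrite inE /= HF; apply/RltbP.
        + rewrite inE /= HF /=; apply/negP => /RltbP.
          rewrite /pos Pz_self. have := Pz_range (A x') (A y'); lra.
    by have := Hmin x'; rewrite leqNgt Hlt.
  - exfalso.
    have Hlt : cnt (A x') < cnt z.
      apply: proper_card; rewrite properE; apply/andP; split.
      - apply/subsetP => [[gx gy]]; rewrite !inE /= => /andP [HG /RltbP Hr].
        rewrite HG /=; apply/RltbP.
        case: (Rlt_dec (pos z gx) (pos z gy)) => // Hc; exfalso.
        have Hne := @hedge_neq z _ _ HG.
        have [Hgx Hgy] := hedgeS HG.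
        apply: (@strip1 (pos z x) (pos z y) (L x) (L y) (pos z x') (pos z y') (L x') (L y')
                  (pos z gx) (pos z gy) (L gx) (L gy)) => //;
          try apply: pos_range; try apply: HL; try apply: (@hedge_nmeet z); try done.
        + exact: meetXX.
        + exact: meetYY.
        + lra.
        + lra.
        + by rewrite -!pos_shift.
      - apply/subsetPn; exists (x', y').
        + by rewrite inE /= HF; apply/RltbP.
        + rewrite inE /= HF /=; apply/negP => /RltbP.
          rewrite /pos Pz_self. have := Pz_range (A x') (A y'); lra.
    by have := Hmin x'; rewrite leqNgt Hlt.
Qed.

Lemma good (z : R) (Hmin : forall w, cnt z <= cnt (A w)) x y x' y' :
  Hedge x y -> Hedge x' y' ->
  (Rmin (pos z x) (pos z y) < Rmax (pos z x') (pos z y'))%R.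
Proof.
  move=> HE HF.
  have [Hx Hy] := hedgeS HE; have [Hx' Hy'] := hedgeS HF.
  apply: good_gen; (first [ apply: pos_range | apply: HL | exact: (@hedge_nmeet z _ _ HE)
    | exact: (@hedge_nmeet z _ _ HF) | exact: meetXX | exact: meetYY
    | (move=> H1 H2; exact: (strip Hmin HE HF))
    | (move=> H1 H2; have [] := strip Hmin HF HE H2 H1; split; lra) ]).
Qed.

Lemma cross z x y x' y' : Hedge x y -> Hedge x' y' -> MeetP z x y' -> MeetP z x' y ->
  Rmin (pos z x) (pos z y) <> Rmin (pos z x') (pos z y') /\
  ((Rmin (pos z x) (pos z y) < Rmin (pos z x') (pos z y'))%R ->
   (Rmin (pos z x') (pos z y') < Rmax (pos z x) (pos z y))%R /\
   (Rmax (pos z x) (pos z y) < Rmax (pos z x') (pos z y'))%R).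
Proof.
  move=> HE HF H1 H2.
  have [Hx Hy] := hedgeS HE; have [Hx' Hy'] := hedgeS HF.
  apply: C1; (first [ apply: pos_range | apply: HL | exact: (@hedge_nmeet z _ _ HE)
    | exact: (@hedge_nmeet z _ _ HF) | exact: meetXX | exact: meetYY | done ]).
Qed.

Lemma trans_core (z : R) (Hmin : forall w, cnt z <= cnt (A w)) x1 y1 x2 y2 x3 y3 :
  Hedge x1 y1 -> Hedge x2 y2 -> Hedge x3 y3 ->
  MeetP z x1 y2 -> MeetP z x2 y1 -> MeetP z x2 y3 -> MeetP z x3 y2 ->
  (Rmin (pos z x1) (pos z y1) < Rmin (pos z x2) (pos z y2))%R ->
  (Rmin (pos z x2) (pos z y2) < Rmin (pos z x3) (pos z y3))%R ->
  MeetP z x1 y3 /\ MeetP z x3 y1.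
Proof.
  move=> H1 H2 H3 M12 M21 M23 M32 K12 K23.
  have [Hx1 Hy1] := hedgeS H1; have [Hx2 Hy2] := hedgeS H2; have [Hx3 Hy3] := hedgeS H3.
  have [_ C12] := cross H1 H2 M12 M21.
  have [_ C23] := cross H2 H3 M23 M32.
  have [C12a C12b] := C12 K12.
  have [C23a C23b] := C23 K23.
  have G31 := good Hmin H3 H1.
  split.
  - apply: NNPP => N13.
    have H13 := nmeet_hedge Hx1 Hy3 N13.
    apply: (@C2a (pos z x1) (pos z y1) (pos z x2) (pos z y2) (pos z x3) (pos z y3)
               (L x1) (L y1) (L x2) (L y2) (L x3) (L y3));
      try apply: pos_range; try apply: HL; try exact: (@hedge_nmeet z);
      try exact: meetXX; try exact: meetYY; try done;
      try exact: (good Hmin); try lra.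
  - apply: NNPP => N31.
    have H31 := nmeet_hedge Hx3 Hy1 N31.
    apply: (@C2b (pos z x1) (pos z y1) (pos z x2) (pos z y2) (pos z x3) (pos z y3)
               (L x1) (L y1) (L x2) (L y2) (L x3) (L y3));
      try apply: pos_range; try apply: HL; try exact: (@hedge_nmeet z);
      try exact: meetXX; try exact: meetYY; try done;
      try exact: (good Hmin); try lra.
Qed.

Lemma ne_SS a b : a \in S -> b \in S -> ~~ e a b.
Proof.
  move=> Ha Hb; case: (eqVneq a b) => [->|Hn]; first by rewrite eirr.
  by have /andP [] := HS1 Ha Hb Hn.
Qed.

Lemma ne_NN a b : a \notin S -> b \notin S -> ~~ e a b.
Proof.
  move=> Ha Hb; case: (eqVneq a b) => [->|Hn]; first by rewrite eirr.
  have Ha' : a \in ~: S by rewrite inE.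
  have Hb' : b \in ~: S by rewrite inE.
  by have /andP [] := HS2 Ha' Hb' Hn.
Qed.

Lemma edge_dec (E : edge_type e) : exists x y, Hedge x y /\ sval E = [set x; y].
Proof.
  case: E => SE /= /existsP [u /existsP [v /and3P [Huv Heuv /eqP ->]]].
  case Hu: (u \in S); case Hv: (v \in S).
  - by have := ne_SS Hu Hv; rewrite Heuv.
  - exists u, v; split => //; by rewrite /Hedge Hu Hv Heuv.
  - exists v, u; split; first by rewrite /Hedge Hu Hv esym Heuv.
    by rewrite setUC.
  - have := @ne_NN u v; rewrite Hu Hv Heuv => /(_ isT isT) //.
Qed.

Definition K (z : R) (E : edge_type e) : R :=
  match [pick x in sval E | x \in S], [pick y in sval E | y \notin S] with
  | Some x, Some y => Rmin (pos z x) (pos z y)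
  | _, _ => 0%R
  end.

Lemma K_eq z (E : edge_type e) x y : Hedge x y -> sval E = [set x; y] ->
  K z E = Rmin (pos z x) (pos z y).
Proof.
  move=> HE HS'; have [Hx Hy] := hedgeS HE.
  rewrite /K HS'.
  case: pickP => [x0 /andP [Hx0 Sx0]|Hn].
  - have -> : x0 = x.
      move: Hx0; rewrite !inE => /orP [/eqP //|/eqP Ey].
      by move: Sx0; rewrite Ey (negbTE Hy).
    case: pickP => [y0 /andP [Hy0 Sy0]|Hn].
    + have -> : y0 = y.
        move: Hy0; rewrite !inE => /orP [/eqP Ex|/eqP //].
        by move: Sy0; rewrite Ex Hx.
      by [].
    + by have := Hn y; rewrite !inE eqxx orbT Hy.
  - by have := Hn x; rewrite !inE eqxx Hx.
Qed.

Lemma star_char z (E1 E2 : edge_type e) x1 y1 x2 y2 :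
  Hedge x1 y1 -> Hedge x2 y2 -> sval E1 = [set x1; y1] -> sval E2 = [set x2; y2] ->
  (star_rel e E1 E2 <-> MeetP z x1 y2 /\ MeetP z x2 y1).
Proof.
  move=> H1 H2 D1 D2.
  have [Hx1 Hy1] := hedgeS H1; have [Hx2 Hy2] := hedgeS H2.
  rewrite /star_rel D1 D2; split.
  - case/andP => _ /forallP Hall.
    have A1 := Hall x1; rewrite !inE eqxx /= in A1.
    have A2 := Hall y1; rewrite !inE eqxx orbT /= in A2.
    move/forallP: A1 => A1; move/forallP: A2 => A2.
    have B1 := A1 y2; rewrite !inE eqxx orbT /= in B1.
    have B2 := A2 x2; rewrite !inE eqxx /= in B2.
    split.
    + apply/(gc_meet z (SnS Hx1 Hy2)); by rewrite /gcompl SnS.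
    + apply/(gc_meet z (SnS Hx2 Hy1)); by rewrite /gcompl SnS // esym.
  - case=> M12 M21; apply/andP; split.
    + rewrite disjoint_subset; apply/subsetP => a; rewrite !inE => /orP [/eqP ->|/eqP ->];
      apply/negP => /orP [/eqP Ea|/eqP Ea].
      * by apply: (@hedge_nmeet z x2 y2 H2); rewrite -Ea.
      * by rewrite -Ea Hx1 in Hy2.
      * by rewrite Ea Hx2 in Hy1.
      * by apply: (@hedge_nmeet z x2 y2 H2); rewrite -Ea.
    + apply/forallP => a; apply/implyP; rewrite !inE => /orP [/eqP ->|/eqP ->];
      apply/forallP => b; apply/implyP; rewrite !inE => /orP [/eqP ->|/eqP ->].
      * exact: ne_SS.
      * exact: (meet_nedge Hx1 Hy2 M12).
      * by rewrite esym; exact: (meet_nedge Hx2 Hy1 M21).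
      * exact: ne_NN.
Qed.

Lemma main_sec (z : R) (Hmin : forall w, cnt z <= cnt (A w)) :
  comparability_graph (star_rel e).
Proof.
  exists (fun E1 E2 => star_rel e E1 E2 && Rltb (K z E1) (K z E2)).
  split; [|split; [|split]].
  - by move=> u v /andP [].
  - move=> u v Hs.
    have [x1 [y1 [H1 D1]]] := edge_dec u; have [x2 [y2 [H2 D2]]] := edge_dec v.
    have [M12 M21] := proj1 (star_char z H1 H2 D1 D2) Hs.
    have Hs' : star_rel e v u by apply/(star_char z H2 H1 D2 D1).
    have [Cne _] := cross H1 H2 M12 M21.
    rewrite (K_eq z H1 D1) (K_eq z H2 D2) Hs Hs' /=.
    case: (Rlt_dec (Rmin (pos z x1) (pos z y1)) (Rmin (pos z x2) (pos z y2))) => Hc.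
    + by apply/orP; left; apply/RltbP.
    + by apply/orP; right; apply/RltbP; lra.
  - move=> u v /andP [_ /RltbP H]; apply/negP => /andP [_ /RltbP H']; lra.
  - move=> u v w /andP [Huv /RltbP Kuv] /andP [Hvw /RltbP Kvw].
    have [x1 [y1 [H1 D1]]] := edge_dec u; have [x2 [y2 [H2 D2]]] := edge_dec v.
    have [x3 [y3 [H3 D3]]] := edge_dec w.
    have [M12 M21] := proj1 (star_char z H1 H2 D1 D2) Huv.
    have [M23 M32] := proj1 (star_char z H2 H3 D2 D3) Hvw.
    rewrite (K_eq z H1 D1) (K_eq z H2 D2) in Kuv.
    rewrite (K_eq z H2 D2) (K_eq z H3 D3) in Kvw.
    have [M13 M31] := trans_core Hmin H1 H2 H3 M12 M21 M23 M32 Kuv Kvw.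
    apply/andP; split.
    + by apply/(star_char z H1 H3 D1 D3).
    + rewrite (K_eq z H1 D1) (K_eq z H3 D3); apply/RltbP; lra.
Qed.

End Graph.

Theorem lemma4 (T : finType) (e : rel T) :
  symmetric e -> irreflexive e ->
  cobipartite (gcompl e) -> circular_arc_graph (gcompl e) ->
  comparability_graph (star_rel e).
Proof.
  move=> esym eirr [S [HS1 HS2]] [A [L [HL Harc]]].
  case: (pickP (@predT T)) => [t0 _|Hemp].
  - case: (@arg_minnP T t0 predT (fun w => cnt e S A (A w)) isT) => i _ Hi.
    apply: (@main_sec T e S A L esym eirr HS1 HS2 HL Harc (A i)).
    move=> w; exact: Hi.
  - apply: (@main_sec T e S A L esym eirr HS1 HS2 HL Harc 0%R).
    by move=> w; have := Hemp w.
Qed.
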